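(* Let $Q$ be a quiver and let $C\subseteq \Bbbk Q$ be a monomial subcoalgebra. If $C$ is left f-qcF, then $C$ is left qcF.
   Context: $\Bbbk$ is a field. The path coalgebra $\Bbbk Q$ of a quiver $Q$ has as basis all paths of $Q$ (including the trivial paths, identified with the vertices), with $\Delta(p)=\sum_{xy=p}x\otimes y$ (where $xy$ is the concatenation of $x$ followed by $y$) and $\varepsilon(p)=1$ if $p$ is trivial, $0$ otherwise. A subcoalgebra $C\subseteq \Bbbk Q$ is monomial if it contains all vertices and arrows of $Q$ and has a linear basis consisting of paths. For a coalgebra $C$, the dual algebra $C^*$ has product $(fg)(x)=\sum f(x_1)g(x_2)$; a right $C$-comodule $M$ (coaction $m\mapsto\sum m_0\otimes m_1$) is a left $C^*$-module via $f\rightharpoonup m=\sum m_0f(m_1)$; in particular $C$ is a left $C^*$-module via $f\rightharpoonup x=\sum x_1 f(x_2)$. $C$ is left quasi-coFrobenius (left qcF) if $C$ embeds, as a left $C^*$-module, in a free left $C^*$-module. $C$ is left f-qcF if every finite dimensional right $C$-comodule embeds, as a left $C^*$-module, in a free left $C^*$-module. *)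

(* Defs.v *)
From HB Require Import structures.
From mathcomp Require Import all_boot all_order all_algebra.
From mathcomp Require Import boolp classical_sets cardinality fsbigop.
Set Implicit Arguments. Unset Strict Implicit. Unset Printing Implicit Defensive.
Import GRing.Theory.
Local Open Scope ring_scope.
Local Open Scope classical_set_scope.

Section PathCoalgebra.
Variables (k : fieldType) (V A : choiceType) (s t : A -> V).
(* A quiver Q: vertices V, arrows A, arrow a goes from s a to t a. *)

(* Raw candidates for paths: a starting vertex and a list of arrows. *)
Definition raw := (V * seq A)%type.

(* (v, [::]) is the trivial path at v; (v, [:: a1; ..; an]) is a path iff
   s a1 = v and t a_i = s a_(i+1). *)
Definition is_path (p : raw) : bool :=
  match p.2 with
  | [::] => true
  | a :: l => (s a == p.1) && path (fun a b => t a == s b) a l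
  end.

Definition tgt (p : raw) : V :=
  match p.2 with [::] => p.1 | a :: l => t (last a l) end.

Definition vtx (v : V) : raw := (v, [::]).
Definition arr (a : A) : raw := (s a, [:: a]).

Definition concat (x y : raw) : raw := (x.1, x.2 ++ y.2).
Definition composable (x y : raw) : bool :=
  [&& is_path x, is_path y & tgt x == y.1].

(* Elements of kQ (resp. X (x) kQ) are represented by their coefficient
   functions on the basis of paths.  Coefficient of x (x) y in Delta(c),
   where Delta(p) = sum_{xy = p} x (x) y. *)
Definition Delta (X : zmodType) (c : raw -> X) (x y : raw) : X :=
  if composable x y then c (concat x y) else 0.

Definition eps (p : raw) : k := (p.2 == [::])%:R.

Definition fin_supp (T : Type) (X : zmodType) (g : T -> X) : Prop :=
  finite_set [set x | g x != 0].

Definition kQ_elt (c : raw -> k) : Prop :=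
  fin_supp c /\ (forall p, c p != 0 -> is_path p).

Definition in_span (S : pred raw) (c : raw -> k) : Prop :=
  kQ_elt c /\ (forall p, c p != 0 -> S p).

(* C = span S is a monomial subcoalgebra of kQ: S consists of paths,
   contains all vertices and arrows, and Delta(C) is contained in
   C (x) C = span (S x S). *)
Definition monomial (S : pred raw) : Prop :=
  [/\ {subset S <= is_path},
      (forall v, S (vtx v)),
      (forall a, S (arr a)) &
      (forall c, in_span S c ->
         forall x y, Delta c x y != 0 -> S x && S y)].

Section Dual.
Variable S : pred raw.

(* C^* = Hom(C, k), identified with functions on the basis S of C. *)
Definition Sp := {p : raw | S p}.
Definition ev (f : Sp -> k) (r : raw) : k :=
  match (insub r : option Sp) with Some q => f q | None => 0 end.

Definition pre (i : nat) (p : raw) : raw := (p.1, take i p.2).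
Definition suf (i : nat) (p : raw) : raw := (tgt (pre i p), drop i p.2).

(* product of C^*: (fg)(p) = sum_{xy = p} f(x) g(y) *)
Definition dmul (f g : Sp -> k) : Sp -> k := fun q =>
  \sum_(i < (size (val q).2).+1)
     ev f (pre i (val q)) * ev g (suf i (val q)).

(* Right C-comodule structure rho : M -> M (x) C, where an element of
   M (x) C is written sum_p (rho m p) (x) p, p ranging over S. *)
Record right_comodule (M : lmodType k) (rho : M -> raw -> M) : Prop := {
  rho_linear : forall (a : k) (m n : M) p,
      rho (a *: m + n) p = a *: rho m p + rho n p;
  rho_fin : forall m, fin_supp (rho m);
  rho_supp : forall m p, rho m p != 0 -> S p;
  rho_coassoc : forall m x y, rho (rho m y) x = Delta (rho m) x y;
  rho_counit : forall m, \sum_(p \in [set: raw]) (eps p *: rho m p) = m }.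

(* left C^*-action on a right comodule: f -> m = sum m_0 f(m_1) *)
Definition cact (M : lmodType k) (rho : M -> raw -> M) (f : Sp -> k) (m : M)
  : M := \sum_(p \in [set: raw]) (ev f p *: rho m p).

(* M (with left C^*-action act) embeds, as a left C^*-module, into a free
   left C^*-module (C^* )-sum over I = direct sum of copies of C^*. *)
Definition embeds_in_free (M : lmodType k) (act : (Sp -> k) -> M -> M)
  : Prop :=
  exists (I : Type) (phi : M -> I -> Sp -> k),
    [/\ (forall m, finite_set [set i | exists q, phi m i q != 0]),
        (forall m n i q, phi (m + n) i q = phi m i q + phi n i q),
        (forall f m i q, phi (act f m) i q = dmul f (phi m i) q) &
        (forall m n, (forall i q, phi m i q = phi n i q) -> m = n)].

(* C as a left C^*-module: (f -> c) = sum c_1 f(c_2), i.e.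
   (f -> c)(x) = sum_y f(y) c(xy). *)
Definition hitC (f : Sp -> k) (c : raw -> k) : raw -> k := fun x =>
  \sum_(y \in [set: raw]) (ev f y * Delta c x y).

Definition left_qcF : Prop :=
  exists (I : Type) (phi : (raw -> k) -> I -> Sp -> k),
    [/\ (forall c, in_span S c -> finite_set [set i | exists q, phi c i q != 0]),
        (forall c d, in_span S c -> in_span S d ->
           forall i q, phi (fun p => c p + d p) i q = phi c i q + phi d i q),
        (forall f c, in_span S c ->
           forall i q, phi (hitC f c) i q = dmul f (phi c i) q) &
        (forall c d, in_span S c -> in_span S d ->
           (forall i q, phi c i q = phi d i q) -> forall p, c p = d p)].

Definition left_fqcF : Prop :=
  forall (M : vectType k) (rho : M -> raw -> M),
    right_comodule rho -> embeds_in_free (cact rho).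

End Dual.
End PathCoalgebra.

(* Main.v *)
Require Import Defs.
From mathcomp Require Import all_boot all_order all_algebra.
From mathcomp Require Import boolp classical_sets cardinality fsbigop.
From mathcomp Require Import finmap.
Set Implicit Arguments. Unset Strict Implicit. Unset Printing Implicit Defensive.

Section Paths.
Variables (V A : choiceType) (s t : A -> V).
Local Notation R := (raw V A).
Local Notation ip := (is_path s t).
Local Notation tg := (tgt t).

Lemma ip_concat_iff (x y : R) : tg x = y.1 ->
  ip (concat x y) = ip x && ip y.
Proof.
case: x y => u [|a l1] [w l2] /= e; rewrite /concat /is_path /= .
  by subst w.
rewrite cat_path; case: l2 e => [|b l2] e /=; first by rewrite !andbT.
rewrite /tgt /= in e; rewrite e (eq_sym w).
by rewrite !andbA.
Qed.

Lemma tgt_concat (x y : R) : tg x = y.1 -> tg (concat x y) = tg y.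
Proof.
case: x y => u [|a l1] [w l2] /= e; rewrite /concat /tgt /=.
  by case: l2.
by case: l2 => [|b l2]; rewrite ?cats0 //= last_cat.
Qed.

Lemma concatA (x y z : R) : concat (concat x y) z = concat x (concat y z).
Proof. by rewrite /concat /= catA. Qed.

Lemma concat_pre_suf i (p : R) : concat (pre i p) (suf t i p) = p.
Proof. by case: p => u l; rewrite /concat /pre /suf /= cat_take_drop. Qed.

Lemma ip_pre i (p : R) : ip p -> ip (pre i p).
Proof. by rewrite -{1}(concat_pre_suf i p) ip_concat_iff // => /andP[]. Qed.

Lemma ip_suf i (p : R) : ip p -> ip (suf t i p).
Proof. by rewrite -{1}(concat_pre_suf i p) ip_concat_iff // => /andP[]. Qed.

Lemma pre_concat (x y : R) : pre (size x.2) (concat x y) = x.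
Proof. by case: x => u l; rewrite /pre /concat /= take_size_cat. Qed.

Lemma suf_concat (x y : R) : tg x = y.1 -> suf t (size x.2) (concat x y) = y.
Proof.
case: y => w l2 /= e; rewrite /suf pre_concat e /concat /=.
by rewrite drop_size_cat.
Qed.

Lemma pre_pre i j (p : R) : i <= j -> pre i (pre j p) = pre i p.
Proof. by move=> ij; rewrite /pre /= take_takel. Qed.

Lemma pre_size (p : R) : pre (size p.2) p = p.
Proof. by case: p => u l; rewrite /pre /= take_size. Qed.

Lemma size_pre i (p : R) : i <= size p.2 -> size (pre i p).2 = i.
Proof. by move=> h; rewrite /pre /= size_takel. Qed.

Lemma pre1 i (p : R) : (pre i p).1 = p.1.
Proof. by []. Qed.

End Paths.

Section Comod.
Import GRing.Theory.
Local Open Scope ring_scope.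
Local Open Scope classical_set_scope.
Variables (k : fieldType) (V A : choiceType) (s t : A -> V) (S : pred (raw V A)).
Hypothesis Hmon : monomial k s t S.
Local Notation R := (raw V A).
Local Notation ip := (is_path s t).
Local Notation tg := (tgt t).
Local Notation comp := (composable s t).

Definition ind (p : R) : R -> k := fun r => (r == p)%:R.

Lemma S_path p : S p -> ip p.
Proof. by case: Hmon => H1 _ _ _; apply: H1. Qed.

Lemma ind_span p : S p -> in_span s t S (ind p).
Proof.
move=> Sp; split; [split|].
- apply: (sub_finite_set _ (finite_set1 p)) => r /=.
  by rewrite /ind; case: (r =P p) => [->//|_]; rewrite eqxx.
- move=> r; rewrite /ind; case: (r =P p) => [-> _|_]; last by rewrite eqxx.
  exact: S_path.
- by move=> r; rewrite /ind; case: (r =P p) => [->//|_]; rewrite eqxx.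
Qed.

Lemma S_sub p x y : S p -> comp x y -> concat x y = p -> S x /\ S y.
Proof.
move=> Sp cxy exy; case: Hmon => _ _ _ H4.
have := H4 _ (ind_span Sp) x y; rewrite /Delta cxy /ind exy eqxx oner_neq0.
by move=> /(_ isT) /andP[].
Qed.

Lemma comp_pre_suf i p : ip p -> comp (pre i p) (suf t i p).
Proof. by move=> h; rewrite /composable ip_pre // ip_suf //= eqxx. Qed.

Lemma S_pre i p : S p -> S (pre i p).
Proof.
move=> Sp; have [] := S_sub Sp (comp_pre_suf i (S_path Sp)) (concat_pre_suf _ _ _) => //.
Qed.

Lemma S_suf i p : S p -> S (suf t i p).
Proof.
move=> Sp; have [] := S_sub Sp (comp_pre_suf i (S_path Sp)) (concat_pre_suf _ _ _) => //.
Qed.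

Lemma comp_assoc (z x y : R) :
  comp z x && comp (concat z x) y = comp x y && comp z (concat x y).
Proof.
rewrite /composable /=.
case: (eqVneq (tg z) x.1) => ezx; last first.
  by rewrite !andbF /= ?andbF.
rewrite ip_concat_iff // tgt_concat //.
case: (eqVneq (tg x) y.1) => exy; last by rewrite !andbF.
rewrite ip_concat_iff // ?eqxx ?andbT.
by case: (ip z); case: (ip x); case: (ip y).
Qed.

Lemma fsum_single (F : R -> k) p0 :
  (forall p, p != p0 -> F p = 0) -> \sum_(p \in [set: R]) F p = F p0.
Proof.
move=> F0; rewrite (fsbigTE [fset p0]%fset) ?big_seq_fset1 // => i.
by rewrite inE => /F0.
Qed.

Section MP.
Variable P : seq R.
Hypothesis HPS : forall r, r \in P -> S r.
Hypothesis HPpre : forall r i, r \in P -> pre i r \in P.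

Definition MP := {ffun seq_sub P -> k^o}.
Definition extP (m : MP) (r : R) : k :=
  if (insub r : option (seq_sub P)) is Some x then m x else 0.
Definition rhoP (m : MP) (p : R) : MP := [ffun x => Delta s t (extP m) (val x) p].

Lemma extP_val m (x : seq_sub P) : extP m (val x) = m x.
Proof. by rewrite /extP valK. Qed.

Lemma extP_out m r : r \notin P -> extP m r = 0.
Proof. by move=> h; rewrite /extP insubN. Qed.

Lemma extP_lin a (m n : MP) r : extP (a *: m + n) r = a * extP m r + extP n r.
Proof. by rewrite /extP; case: insub => [x|]; rewrite ?ffunE ?mulr0 ?addr0. Qed.

Lemma extP_rhoP m y r : extP (rhoP m y) r = Delta s t (extP m) r y.
Proof.
case: (boolP (r \in P)) => h.
  by rewrite /extP insubT /= ffunE.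
rewrite extP_out // /Delta; case: ifP => // c.
rewrite extP_out //; apply: contra h => h.
by rewrite -(pre_concat r y); apply: HPpre.
Qed.

Lemma rhoP_supp m p : rhoP m p != 0 ->
  exists2 x : seq_sub P, comp (val x) p & concat (val x) p \in P.
Proof.
move=> h; have [x hx] : exists x, rhoP m p x != 0.
  case: (pselect (exists x, rhoP m p x != 0)) => // nx.
  case/negP: h; apply/eqP/ffunP => x; rewrite [RHS]ffunE.
  apply/eqP; apply: contra_notP nx => hx; exists x; exact/negP.
move: hx; rewrite ffunE /Delta; case: ifP => // c; last by rewrite eqxx.
move=> hx; exists x => //; apply: contraTT hx => hx.
by rewrite extP_out ?eqxx.
Qed.

Definition sufs : seq R := [seq suf t i r | r <- P, i <- iota 0 (size r.2).+1].

Lemma rhoP_fin m : fin_supp (rhoP m).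
Proof.
apply: (sub_finite_set _ (finite_seq sufs)) => p /= /rhoP_supp [x c hP].
apply/allpairsPdep; exists (concat (val x) p), (size (val x).2); split => //.
  by rewrite mem_iota /= size_cat ltnS leq_addr.
rewrite suf_concat //; by case/and3P: c => _ _ /eqP.
Qed.

Lemma rhoP_Ssupp m p : rhoP m p != 0 -> S p.
Proof.
move=> /rhoP_supp [x c hP].
by have [] := S_sub (HPS hP) c erefl.
Qed.

Lemma fsum_ffun (F : R -> MP) x : fin_supp F ->
  (\sum_(p \in [set: R]) F p) x = \sum_(p \in [set: R]) F p x.
Proof.
move=> fF; pose X := fset_set [set p | F p != 0].
have FX : forall i, i \notin X -> F i = 0.
  move=> i; rewrite in_fset_set // notin_setE /= => h.
  by apply/eqP; apply: contra_notP h => /negP.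
rewrite (fsbigTE X) // (fsbigTE X) ?sum_ffunE // => i /FX ->.
by rewrite ffunE.
Qed.

Lemma rhoP_comodule : right_comodule s t S rhoP.
Proof.
split.
- move=> a m n p; apply/ffunP => x; rewrite !ffunE /Delta.
  by case: (comp _ _); rewrite ?extP_lin // ?scaler0 ?addr0.
- exact: rhoP_fin.
- exact: rhoP_Ssupp.
- move=> m x y; apply/ffunP => z; rewrite ffunE.
  have E := comp_assoc (val z) x y.
  rewrite {2}/Delta; case cxy: (comp x y); last first.
    rewrite ffunE /Delta; case czx: (comp (val z) x) => //.
    rewrite extP_rhoP /Delta; move: E; rewrite cxy czx /=.
    by move=> ->.
  rewrite ffunE /Delta extP_rhoP /Delta; move: E; rewrite cxy /=.
  case: (comp (val z) x); case: (comp (concat (val z) x) y);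
   case: (comp (val z) (concat x y)) => //= _.
  by rewrite concatA.
- move=> m; apply/ffunP => z.
  rewrite fsum_ffun; last first.
    apply: (sub_finite_set _ (rhoP_fin m)) => p /=; apply: contra => /eqP ->.
    by rewrite scaler0.
  rewrite (@fsum_single _ (vtx A (tg (val z)))).
    rewrite ffunE ffunE /eps /= /Delta /composable /= eqxx andbT.
    have -> : ip (val z) by apply: S_path; apply: HPS; exact: valP.
    by rewrite /concat /= cats0 scale1r -surjective_pairing extP_val.
  move=> p hp; rewrite ffunE ffunE /eps /Delta.
  case: (eqVneq p.2 [::]) => e; last by rewrite /= scale0r.
  case: ifP => c; last by rewrite scaler0.
  case/and3P: c => _ _ /eqP c; case/negP: hp.
  by apply/eqP; rewrite /vtx c -e -surjective_pairing.
Qed.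

Lemma cactE (f : Sp S -> k) m : cact rhoP f m = [ffun x => hitC s t f (extP m) (val x)].
Proof.
apply/ffunP => x; rewrite ffunE /cact fsum_ffun; last first.
  apply: (sub_finite_set _ (rhoP_fin m)) => p /=; apply: contra => /eqP ->.
  by rewrite scaler0.
by apply: eq_fsbigr => p _; rewrite !ffunE.
Qed.

End MP.
End Comod.

From mathcomp Require Import zify.
Section Key.
Import GRing.Theory.
Local Open Scope ring_scope.
Local Open Scope classical_set_scope.
Variables (k : fieldType) (V A : choiceType) (s t : A -> V) (S : pred (raw V A)).
Hypothesis Hmon : monomial k s t S.
Local Notation R := (raw V A).
Local Notation ip := (is_path s t).
Local Notation tg := (tgt t).
Local Notation comp := (composable s t).

Definition dl (p : R) : Sp S -> k := fun q => (val q == p)%:R.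

Lemma ev_dl p r : ev (dl p) r != 0 -> r = p.
Proof.
rewrite /ev /dl; case: insubP => [q _ <-|]; last by rewrite eqxx.
by case: (val q =P p) => // _; rewrite eqxx.
Qed.

Lemma ev_dl_self p : S p -> ev (dl p) p = 1.
Proof. by move=> Sp; rewrite /ev /dl insubT /= eqxx. Qed.

Lemma ev_val (g : Sp S -> k) (q : Sp S) : ev g (val q) = g q.
Proof. by rewrite /ev valK. Qed.

Lemma hitC_dl p (c : R -> k) x : S p -> hitC s t (dl p) c x = Delta s t c x p.
Proof.
move=> Sp; rewrite /hitC (fsum_single (p0:=p)).
  by rewrite ev_dl_self // mul1r.
move=> y hy; have : ev (dl p) y == 0.
  by apply: contraNT hy => /ev_dl ->.
by move/eqP ->; rewrite mul0r.
Qed.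

Lemma sum_neq0 n (F : 'I_n -> k) : \sum_(i < n) F i != 0 -> exists i, F i != 0.
Proof.
move=> h; case: (pselect (exists i, F i != 0)) => // nx.
case/negP: h; apply/eqP; apply: big1 => i _; apply/eqP.
by apply: contra_notP nx => hi; exists i; exact/negP.
Qed.

Lemma pre_eq_size j (q p : R) : pre j q = p -> pre (size p.2) q = p.
Proof.
move=> <-; rewrite /pre /=; congr pair.
by rewrite -{2}(cat_take_drop j q.2) take_size_cat.
Qed.

Lemma vtx_S v : S (vtx A v).
Proof. by case: Hmon. Qed.

Lemma arr_S a : S (arr s a).
Proof. by case: Hmon. Qed.

Lemma concat_eq_vtx (x p : R) : ip x -> ip p ->
  comp x p && (concat x p == p) = (x == vtx A p.1).
Proof.
case: x => u [|b l] ipx ipp.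
  rewrite /composable ipx ipp /concat /vtx /= /tgt /=.
  case: (eqVneq u p.1) => [->|ne].
    by rewrite -surjective_pairing !eqxx.
  by rewrite xpair_eqE (negbTE ne).
rewrite [RHS](_ : _ = false); last by rewrite /vtx xpair_eqE /= andbF.
apply/negbTE/negP => /andP[_ /eqP e]; move: (f_equal (fun r => size r.2) e).
rewrite /concat /= size_cat /=; lia.
Qed.

Section MPkey.
Variable P : seq R.
Hypothesis HPS : forall r, r \in P -> S r.
Hypothesis HPpre : forall r i, r \in P -> pre i r \in P.
Hypothesis Hf : left_fqcF k s t S.

Definition indP (p : R) : MP k P := [ffun x => (val x == p)%:R].

Lemma extP_ind p r : p \in P -> extP (indP p) r = (r == p)%:R.
Proof.
move=> hp; case: (boolP (r \in P)) => h.
  by rewrite /extP insubT ffunE.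
rewrite extP_out //; case: (r =P p) => // e.
by move: h; rewrite e hp.
Qed.

Lemma embP : embeds_in_free t (cact (S:=S) (@rhoP k _ _ s t P)).
Proof. exact: (Hf (rhoP_comodule Hmon HPS HPpre)). Qed.

Lemma phi0 (I : Type) (phi : MP k P -> I -> Sp S -> k) :
  (forall m n i q, phi (m + n) i q = phi m i q + phi n i q) ->
  forall i q, phi 0 i q = 0.
Proof.
move=> Hadd i q; have h := Hadd 0 0 i q; rewrite addr0 in h.
by apply: (@addrI _ (phi 0 i q)); rewrite addr0 -h.
Qed.

Lemma cact_ind p : p \in P ->
  cact (S:=S) (@rhoP k _ _ s t P) (dl p) (indP p) = indP (vtx A p.1).
Proof.
move=> hp; rewrite (cactE s t); apply/ffunP => x; rewrite !ffunE hitC_dl; last exact: HPS.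
rewrite /Delta extP_ind //.
have := concat_eq_vtx (S_path Hmon (HPS (valP x))) (S_path Hmon (HPS hp)).
by case: (comp _ _) => /= <-.
Qed.

Lemma vtx_lambda v : vtx A v \in P ->
  exists (I : Type) (phi : MP k P -> I -> Sp S -> k) (i : I) (q : Sp S),
    [/\ (forall f m i q, phi (cact (S:=S) (@rhoP k _ _ s t P) f m) i q = dmul t f (phi m i) q),
        (forall i q, phi 0 i q = 0) &
        phi (indP (vtx A v)) i q != 0].
Proof.
move=> hv; have [I [phi [_ Hadd Hact Hinj]]] := embP.
exists I, phi; case: (pselect (exists i q, phi (indP (vtx A v)) i q != 0)).
  by move=> [i [q h]]; exists i, q; split => //; exact: phi0.
move=> nx; exfalso.
have : indP (vtx A v) = 0.
  apply: Hinj => i q; rewrite (phi0 Hadd); apply/eqP.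
  by apply: contra_notP nx => h; exists i, q; exact/negP.
move/ffunP/(_ (SeqSub hv)); rewrite !ffunE /= eqxx => /eqP.
by rewrite oner_eq0.
Qed.

Lemma prefix_of (I : Type) (phi : MP k P -> I -> Sp S -> k) p i q :
  (forall f m i q, phi (cact (S:=S) (@rhoP k _ _ s t P) f m) i q = dmul t f (phi m i) q) ->
  p \in P -> phi (indP (vtx A p.1)) i q != 0 -> pre (size p.2) (val q) = p.
Proof.
move=> Hact hp; rewrite -cact_ind // Hact /dmul => /sum_neq0 [j].
case: (eqVneq (ev (dl p) (pre j (val q))) 0) => [->|/ev_dl h _]; first by rewrite mul0r eqxx.
exact: pre_eq_size h.
Qed.

End MPkey.
End Key.

Section Chain.
Import GRing.Theory.
Local Open Scope ring_scope.
Local Open Scope classical_set_scope.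
Variables (k : fieldType) (V A : choiceType) (s t : A -> V) (S : pred (raw V A)).
Hypothesis Hmon : monomial k s t S.
Hypothesis Hf : left_fqcF k s t S.
Local Notation R := (raw V A).
Local Notation ip := (is_path s t).
Local Notation tg := (tgt t).
Local Notation comp := (composable s t).

Definition prefs (p : R) : seq R := [seq pre i p | i <- iota 0 (size p.2).+1].

Lemma mem_prefs n (p : R) : (n <= size p.2)%N -> pre n p \in prefs p.
Proof. by move=> h; rewrite /prefs; apply: (map_f (fun i => pre i p)); rewrite mem_iota /= ltnS. Qed.

Lemma prefsP (r p : R) : r \in prefs p -> exists2 n, (n <= size p.2)%N & r = pre n p.
Proof. by case/mapP => n; rewrite mem_iota /= ltnS => h ->; exists n. Qed.

Lemma prefs_S p r : S p -> r \in prefs p -> S r.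
Proof. by move=> Sp /prefsP [n _ ->]; apply: (S_pre Hmon). Qed.

Lemma prefs_pre p r i : r \in prefs p -> pre i r \in prefs p.
Proof.
case/prefsP => n hn ->; case: (leqP i n) => hi.
  by rewrite pre_pre // mem_prefs // (leq_trans hi).
by rewrite /pre /= take_taker ?(ltnW hi) // mem_prefs.
Qed.

Lemma chain p1 p2 : S p1 -> S p2 -> p1.1 = p2.1 ->
  pre (size p1.2) p2 = p1 \/ pre (size p2.2) p1 = p2.
Proof.
move=> S1 S2 e.
pose P := prefs p1 ++ prefs p2.
have HPS : forall r, r \in P -> S r.
  by move=> r; rewrite mem_cat => /orP[]; [apply: prefs_S | apply: prefs_S].
have HPpre : forall r i, r \in P -> pre i r \in P.
  by move=> r i; rewrite !mem_cat => /orP[] h; rewrite (prefs_pre i h) ?orbT.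
have h1 : p1 \in P by rewrite mem_cat -{1}(pre_size p1) mem_prefs.
have h2 : p2 \in P by rewrite mem_cat; apply/orP; right; rewrite -{1}(pre_size p2) mem_prefs.
have e0 : pre 0 p1 = vtx A p1.1 by rewrite /pre take0.
have hv : vtx A p1.1 \in P by rewrite mem_cat -e0 mem_prefs.
have [I [phi [i [q [Hact H0 hne]]]]] := vtx_lambda Hmon HPS HPpre Hf hv.
have q1 := prefix_of Hmon HPS Hact h1 hne.
rewrite e in hne; have q2 := prefix_of Hmon HPS Hact h2 hne.
case: (leqP (size p1.2) (size p2.2)) => le.
  by left; rewrite -{1}q2 pre_pre.
by right; rewrite -{1}q1 pre_pre // ltnW.
Qed.

Lemma nonext v : exists q, [/\ S q, q.1 = v &
  forall a, t a = v -> ~ S (concat (arr s a) q)].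
Proof.
pose P := [:: vtx A v].
have HPS : forall r, r \in P -> S r.
  by move=> r; rewrite mem_seq1 => /eqP ->; apply: (vtx_S Hmon).
have HPpre : forall r i, r \in P -> pre i r \in P.
  by move=> r i; rewrite mem_seq1 => /eqP ->; rewrite /pre /vtx /= mem_seq1; case: i.
have hv : vtx A v \in P by rewrite mem_seq1.
have [I [phi [i [q [Hact H0 hne]]]]] := vtx_lambda Hmon HPS HPpre Hf hv.
have qv : (val q).1 = v.
  by have := prefix_of Hmon HPS Hact hv hne => /(f_equal fst).
exists (val q); split => //; first exact: valP.
move=> a ta hS.
pose w := arr s a.
have Hc : cact (S:=S) (@rhoP k _ _ s t P) (@dl k _ _ S w) (indP k P (vtx A v)) = 0.
  rewrite (cactE s t); apply/ffunP => x; rewrite ffunE [RHS]ffunE.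
  rewrite hitC_dl; last exact: (arr_S Hmon).
  rewrite /Delta; case: ifP => // _; rewrite extP_ind //.
  by rewrite /concat /vtx xpair_eqE /=; case: (val x).2 => [|? ?]; rewrite andbF.
pose q' : Sp S := exist _ (concat w (val q)) hS.
have := Hact (@dl k _ _ S w) (indP k P (vtx A v)) i q'; rewrite Hc H0.
rewrite /dmul /= big_ord_recl big_ord_recl /=.
rewrite [X in _ = _ + (_ + X)]big1; last first.
  move=> j _; case: (eqVneq (ev (@dl k _ _ S w) (pre (bump 0 (bump 0 j)) (concat w (val q)))) 0) => [->|/ev_dl h].
    by rewrite mul0r.
  move: (f_equal (fun r => size r.2) h) => {h}; rewrite /bump !leq0n !add1n /=.
  by rewrite size_takel //; case: j.
have -> : ev (@dl k _ _ S w) (pre 0 (concat w (val q))) = 0.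
  apply/eqP; apply: contraT => /ev_dl h.
  by move: (f_equal (fun r => size r.2) h).
rewrite (_ : pre (bump 0 0) _ = w); last by rewrite /pre /w /arr /bump /= addn0 take0.
rewrite ev_dl_self; last exact: (arr_S Hmon).
rewrite (_ : suf t (bump 0 0) _ = val q); last first.
  by rewrite /suf /tgt /pre /bump /= addn0 take0 drop0 /= ta -qv -surjective_pairing.
rewrite ev_val mul0r add0r mul1r addr0 => /esym/eqP.
by rewrite (negbTE hne).
Qed.

End Chain.

Section Final.
Import GRing.Theory.
Local Open Scope ring_scope.
Local Open Scope classical_set_scope.
Variables (k : fieldType) (V A : choiceType) (s t : A -> V) (S : pred (raw V A)).
Hypothesis Hmon : monomial k s t S.
Hypothesis Hf : left_fqcF k s t S.
Local Notation R := (raw V A).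

Lemma maxpath v : exists m, [/\ S m, m.1 = v &
  forall p, S p -> p.1 = v -> pre (size p.2) m = p].
Proof.
case: (pselect (exists m, [/\ S m, m.1 = v &
  forall p, S p -> p.1 = v -> pre (size p.2) m = p])) => // H; exfalso.
have Hn : forall n, exists u, [/\ S u, u.1 = v & size u.2 = n].
  elim => [|n [u [Su uv un]]].
    by exists (vtx A v); split => //; apply: (vtx_S Hmon).
  have : ~ (forall p, S p -> p.1 = v -> pre (size p.2) u = p).
    by move=> hall; apply: H; exists u.
  move/existsNP => [p] /not_implyP [Sp] /not_implyP [pv] hne.
  have [c|c] := chain Hmon Hf Su Sp (etrans uv (esym pv)); last by [].
  have hp : (n < size p.2)%N.
    rewrite ltnNge; apply/negP => hle; apply: hne.
    have up : u = p by rewrite -c /pre take_oversize ?un // -surjective_pairing.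
    by rewrite -up pre_size.
  exists (pre n.+1 p); split; first exact: (S_pre Hmon).
    by rewrite pre1.
  exact: size_pre.
have [u1 [S1 e1 z1]] := Hn 1%N.
case: u1 S1 e1 z1 => w [|a1 [|? ?]] S1 e1 z1 //=.
have sa : s a1 = v.
  by have := S_path Hmon S1; rewrite /is_path /= andbT => /eqP ->.
have [q [Sq qv Hq]] := nonext Hmon Hf (t a1).
have [u [Su uv un]] := Hn (size q.2).+1.
have pu : pre 1 u = (w, [:: a1]).
  have [c|c] := chain Hmon Hf S1 Su (etrans e1 (esym uv)); first by [].
  by rewrite -c pre_pre ?un // pre_size.
pose r := suf t 1 u.
have Sr : S r by apply: (S_suf Hmon).
have r1 : r.1 = q.1 by rewrite qv /r /suf pu /tgt.
have rs : size r.2 = size q.2 by rewrite /r /suf /= size_drop un subn1.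
have rq : r = q.
  have [c|c] := chain Hmon Hf Sr Sq r1.
    by rewrite -c rs pre_size.
  by rewrite -c -rs pre_size.
apply: (Hq a1 erefl).
rewrite -rq (_ : arr s a1 = pre 1 u); first by rewrite concat_pre_suf.
by rewrite pu /arr sa -e1.
Qed.

End Final.

Section Main.
Import GRing.Theory.
Local Open Scope ring_scope.
Local Open Scope classical_set_scope.
Variables (k : fieldType) (V A : choiceType) (s t : A -> V) (S : pred (raw V A)).
Hypothesis Hmon : monomial k s t S.
Hypothesis Hf : left_fqcF k s t S.
Local Notation R := (raw V A).

Definition mv (v : V) : R := sval (cid (maxpath Hmon Hf v)).
Lemma mvP v : [/\ S (mv v), (mv v).1 = v &
  forall p, S p -> p.1 = v -> pre (size p.2) (mv v) = p].
Proof. exact: svalP (cid (maxpath Hmon Hf v)). Qed.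

Definition PV v := prefs (mv v).

Lemma PV_S v r : r \in PV v -> S r.
Proof. by apply: (prefs_S Hmon); case: (mvP v). Qed.

Lemma PV_pre v r i : r \in PV v -> pre i r \in PV v.
Proof. exact: prefs_pre. Qed.

Lemma PV_v v r : r \in PV v -> r.1 = v.
Proof. by case/prefsP => n _ ->; rewrite pre1; case: (mvP v). Qed.

Lemma PV_in v p : S p -> p.1 = v -> p \in PV v.
Proof.
move=> Sp pv; case: (mvP v) => _ _ /(_ p Sp pv) e.
rewrite -e /PV; case: (leqP (size p.2) (size (mv v).2)) => h.
  exact: mem_prefs.
rewrite /pre take_oversize ?(ltnW h) //.
by rewrite -surjective_pairing -{1}(pre_size (mv v)) mem_prefs.
Qed.

Lemma Emb v : {I : Type & {phi : MP k (PV v) -> I -> Sp S -> k |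
    [/\ (forall m, finite_set [set i | exists q, phi m i q != 0]),
        (forall m n i q, phi (m + n) i q = phi m i q + phi n i q),
        (forall f m i q, phi (cact (S:=S) (@rhoP k _ _ s t (PV v)) f m) i q = dmul t f (phi m i) q) &
        (forall m n, (forall i q, phi m i q = phi n i q) -> m = n)]}}.
Proof.
have := embP Hmon (@PV_S v) (@PV_pre v) Hf.
move=> /cid [I /cid [phi H]]; exists I; exists phi; exact: H.
Qed.

Definition restr v (c : R -> k) : MP k (PV v) := [ffun x => c (val x)].

End Main.

Import GRing.Theory.
Local Open Scope ring_scope.
Local Open Scope classical_set_scope.

Theorem theorem4p8 (k : fieldType) (V A : choiceType) (s t : A -> V)
    (S : pred (raw V A)) :
  monomial k s t S -> left_fqcF k s t S -> left_qcF k s t S.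
Proof.
move=> Hmon Hf.
pose Iv v := projT1 (Emb Hmon Hf v).
pose phv v : MP k (PV Hmon Hf v) -> Iv v -> Sp S -> k := sval (projT2 (Emb Hmon Hf v)).
have phvP v := svalP (projT2 (Emb Hmon Hf v)).
exists {v : V & Iv v}.
exists (fun c j q => phv (projT1 j) (restr Hmon Hf (projT1 j) c) (projT2 j) q).
split.
- move=> c [[fc _] sc].
  pose Vs := fst @` [set x | c x != 0].
  apply: (sub_finite_set (B := \bigcup_(v in Vs)
     (fun i => existT _ v i : {v : V & Iv v}) @` [set i | exists q, phv v (restr Hmon Hf v c) i q != 0])).
    move=> [v i] /= [q hq]; exists v.
      case: (pselect (Vs v)) => // nV; exfalso.
      have r0 : restr Hmon Hf v c = 0.
        apply/ffunP => x; rewrite !ffunE; apply/eqP; apply: contra_notT nV => hx.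
        by exists (val x) => //; apply: PV_v (valP x).
      have [_ Hadd _ _] := phvP v.
      by move: hq; rewrite r0 /phv (phi0 Hadd) eqxx.
    by exists i => //; exists q.
  apply: bigcup_finite; first exact: (finite_image _ fc).
  move=> v _; apply: finite_image; have [H _ _ _] := phvP v; exact: H.
- move=> c d _ _ [v i] q /=.
  have [_ Hadd _ _] := phvP v.
  rewrite -Hadd; congr phv; apply/ffunP => x; by rewrite !ffunE.
- move=> f c [[_ cS] cSS] [v i] q /=.
  have [_ _ Hact _] := phvP v.
  rewrite -Hact; congr phv.
  rewrite (cactE s t); apply/ffunP => x; rewrite !ffunE /hitC.
  apply: eq_fsbigr => y _; congr (_ * _); rewrite /Delta; case: ifP => // cxy.
  case: (boolP (concat (val x) y \in PV Hmon Hf v)) => h.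
    by rewrite /extP insubT ffunE.
  rewrite extP_out //; apply/eqP; apply: contraNT h => hc.
  by apply: PV_in; [exact: cSS | exact: PV_v (valP x)].
- move=> c d [_ cS] [_ dS] H p.
  case: (boolP (S p)) => Sp; last first.
    have -> : c p = 0 by apply/eqP; apply: contraNT Sp; exact: cS.
    by have -> : d p = 0 by apply/eqP; apply: contraNT Sp; exact: dS.
  have [_ _ _ Hinj] := phvP p.1.
  have e : restr Hmon Hf p.1 c = restr Hmon Hf p.1 d.
    by apply: Hinj => i q; exact: (H (existT _ p.1 i) q).
  have hp := PV_in Hmon Hf Sp erefl.
  by move/ffunP: e => /(_ (SeqSub hp)); rewrite !ffunE.
Qed.
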